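(* For nonnegative integers $n,m$, \[\sum_{r=0}^n\sum_{s=0}^m\mathcal{K}_{n,m;r,s}(z/q,w/q;q)\,\Phi_{r,s}(u,v;c,d;z,w;q)=\Phi_{n,m}(uz,vw;cz,dw;z,w;q).\]
   Context: For $n\in\mathbb{Z}$, $(a;q)_n=(a;q)_\infty/(aq^n;q)_\infty$ ($1/(q;q)_n=0$ for $n<0$), $(a_1,\dots,a_k;q)_n=\prod_i(a_i;q)_n$. $\mathcal{K}_{n,m;r,s}(z,w;q):=\frac{z^rw^sq^{r^2-rs+s^2}}{(q;q)_{n-r}(q;q)_{m-s}}$. Let $Q=\{y=(y_1,y_2,y_3)\in\mathbb{Z}^3:y_1+y_2+y_3=0\}$ and $y_{ij}:=y_i-y_j$. For integers $n,m$ and $y\in Q$, \[\Phi_{n,m;y}(z,w;q):=\frac{(zwq;q)_{n+m}}{(q;q)_{n-y_1}(zq;q)_{n-y_2}(zwq;q)_{n-y_3}(q;q)_{m+y_3}(wq;q)_{m+y_2}(zwq;q)_{m+y_1}}.\] With $\rho=(1,2,3)$ and permutations $\sigma\in S_3$ written in one-line notation $\sigma=(\sigma_1,\sigma_2,\sigma_3)$ (so $\sigma-\rho\in Q$), define \[\Phi_{n,m}(u,v;c,d;z,w;q):=\sum_{\sigma\in S_3}\operatorname{sgn}(\sigma)(uz)^{\sigma_1-1}\Big(\frac{v}{d}\Big)^{\chi(\sigma_3=1)}\Big(\frac{c}{u}\Big)^{\chi(\sigma_1=3)}(dw)^{3-\sigma_3}\,\Phi_{n,m;\sigma-\rho}(z/q,w/q;q),\]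 where $\chi$ is the indicator function. *)

(* Defs.v *)
From mathcomp Require Import all_boot all_order all_algebra all_fingroup.
Set Implicit Arguments. Unset Strict Implicit. Unset Printing Implicit Defensive.
Import Order.TTheory GRing.Theory Num.Theory.
Local Open Scope ring_scope.

Section Defs.
Variable F : fieldType.

(* q-Pochhammer (a;q)_n for n : int, with (a;q)_n = (a;q)_oo/(a q^n;q)_oo,
   i.e. (a;q)_{-N} = 1 / prod_{j=1}^N (1 - a q^{-j}). *)
Definition qpoch (a q : F) (n : int) : F :=
  match n with
  | Posz k => \prod_(j < k) (1 - a * q ^+ j)
  | Negz k => (\prod_(j < k.+1) (1 - a * q ^- j.+1))^-1
  end.

(* 1/(a;q)_n.  For a = q and n < 0 this is automatically 0 (factor 1 - q^0). *)
Definition rqpoch (a q : F) (n : int) : F := (qpoch a q n)^-1.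

Definition Kcal (n m r s : int) (z w q : F) : F :=
  z ^ r * w ^ s * q ^ (r ^+ 2 - r * s + s ^+ 2)
  * rqpoch q q (n - r) * rqpoch q q (m - s).

Definition Phiy (n m y1 y2 y3 : int) (z w q : F) : F :=
  qpoch (z * w * q) q (n + m)
  * rqpoch q q (n - y1) * rqpoch (z * q) q (n - y2)
  * rqpoch (z * w * q) q (n - y3)
  * rqpoch q q (m + y3) * rqpoch (w * q) q (m + y2)
  * rqpoch (z * w * q) q (m + y1).

Definition i0 : 'I_3 := @Ordinal 3 0 isT.
Definition i1 : 'I_3 := @Ordinal 3 1 isT.
Definition i2 : 'I_3 := @Ordinal 3 2 isT.

(* one-line notation: sigma_i = s (i-1) + 1, so sigma - rho has
   components y_i = s(i-1) - (i-1). *)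
Definition Phi (n m : int) (u v c d z w q : F) : F :=
  \sum_(s : 'S_3)
    (-1) ^+ s * (u * z) ^+ (s i0 : nat)
    * (v / d) ^+ (s i2 == i0) * (c / u) ^+ (s i0 == i2)
    * (d * w) ^+ (2 - s i2)%N
    * Phiy n m ((s i0 : nat)%:Z - 0) ((s i1 : nat)%:Z - 1) ((s i2 : nat)%:Z - 2)
           (z / q) (w / q) q.

End Defs.

(* Main.v *)
Require Import Defs.
From mathcomp Require Import all_boot all_order all_algebra all_fingroup.
From mathcomp Require Import zify ring.
Import Order.TTheory GRing.Theory Num.Theory.
Local Open Scope ring_scope.

Set Implicit Arguments. Unset Strict Implicit. Unset Printing Implicit Defensive.

Definition P (F : fieldType) (q x : F) (k : nat) : F := \prod_(j < k) (1 - x * q ^+ j).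

Section Core.
Variable F : fieldType.
Variable q : F.
Hypothesis hq0 : q != 0.
Hypothesis hPq : forall k, P q q k != 0.
Local Notation PP := (P q).

Lemma PS x k : PP x k.+1 = PP x k * (1 - x * q ^+ k).
Proof. by rewrite /P big_ord_recr. Qed.

Lemma PSl x k : PP x k.+1 = (1 - x) * PP (x * q) k.
Proof.
rewrite /P big_ord_recl expr0 mulr1; congr (_ * _).
by apply: eq_bigr => i _; rewrite lift0 exprS mulrA.
Qed.

Lemma PD x a b : PP x (a + b) = PP x a * PP (x * q ^+ a) b.
Proof.
elim: b => [|b IH]; first by rewrite addn0 /P big_ord0 mulr1.
by rewrite addnS !PS IH -mulrA -mulrA exprD.
Qed.

Lemma P0 x : PP x 0 = 1. Proof. by rewrite /P big_ord0. Qed.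

Lemma hq1 k : 1 - q * q ^+ k != 0.
Proof. by have := hPq k.+1; rewrite PS mulf_eq0 negb_or => /andP[]. Qed.

Definition qb (N k : nat) : F :=
  if (k <= N)%N then PP q N / (PP q k * PP q (N - k)) else 0.

Lemma qb_gt N k : (N < k)%N -> qb N k = 0.
Proof. by rewrite /qb ltnNge => /negbTE ->. Qed.

Lemma qb0 N : qb N 0 = 1.
Proof. by rewrite /qb leq0n subn0 P0 mul1r divff. Qed.

Lemma qbNN N : qb N N = 1.
Proof. by rewrite /qb leqnn subnn P0 mulr1 divff. Qed.

Lemma pascal2 N k : qb N.+1 k.+1 = qb N k.+1 + q ^+ (N - k) * qb N k.
Proof.
case: (ltngtP k N) => Hk.
- have [d ->] : exists d, N = (k + d.+1)%N by exists (N - k.+1)%N; lia.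
  rewrite /qb.
  have -> : (k.+1 <= (k + d.+1).+1)%N by lia.
  have -> : (k.+1 <= (k + d.+1))%N by lia.
  have -> : (k <= (k + d.+1))%N by lia.
  have -> : ((k + d.+1).+1 - k.+1 = d.+1)%N by lia.
  have -> : ((k + d.+1) - k.+1 = d)%N by lia.
  have -> : ((k + d.+1) - k = d.+1)%N by lia.
  rewrite !PS exprD.
  have h1 := hPq k. have h2 := hPq d. have h3 := hPq (k + d.+1).
  have h4 := hq1 k. have h5 := hq1 d.
  rewrite exprS. field.
  by rewrite h1 h2 h4 h5.
- by rewrite !qb_gt // ?mulr0 ?addr0 //; lia.
- by subst k; rewrite !qbNN qb_gt // subnn expr0 mul1r add0r.
Qed.

Lemma pascal1 N k : qb N.+1 k.+1 = qb N k + q ^+ k.+1 * qb N k.+1.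
Proof.
case: (ltngtP k N) => Hk.
- have [d ->] : exists d, N = (k + d.+1)%N by exists (N - k.+1)%N; lia.
  rewrite /qb.
  have -> : (k.+1 <= (k + d.+1).+1)%N by lia.
  have -> : (k.+1 <= (k + d.+1))%N by lia.
  have -> : (k <= (k + d.+1))%N by lia.
  have -> : ((k + d.+1).+1 - k.+1 = d.+1)%N by lia.
  have -> : ((k + d.+1) - k.+1 = d)%N by lia.
  have -> : ((k + d.+1) - k = d.+1)%N by lia.
  rewrite !PS exprD.
  have h1 := hPq k. have h2 := hPq d. have h3 := hPq (k + d.+1).
  have h4 := hq1 k. have h5 := hq1 d.
  rewrite !exprS. field.
  by rewrite h1 h2 h4 h5.
- by rewrite !qb_gt // ?mulr0 ?addr0 //; lia.
- by subst k; rewrite !qbNN (qb_gt (ltnSn N)) mulr0 addr0.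
Qed.

Lemma Pshift_nz c : (forall j, PP c j.+1 != 0) -> forall j, PP (c * q) j != 0.
Proof. by move=> h j; have := h j; rewrite PSl mulf_eq0 negb_or => /andP[]. Qed.

Lemma P1_nz c : (forall j, PP c j.+1 != 0) -> 1 - c != 0.
Proof. by move=> h; have := h 0%N; rewrite PSl mulf_eq0 negb_or => /andP[]. Qed.

Lemma sumA L c : (forall j, PP (c * q) j != 0) ->
  \sum_(0 <= j < L.+1) qb L j * c ^+ j * q ^+ (j * j) / PP (c * q) j
  = (PP (c * q) L)^-1.
Proof.
elim: L c => [|L IH] c hc.
  by rewrite big_nat1 qb0 P0 muln0 !expr0 invr1 !mulr1.
have hc1 : forall j, PP (c * q) j.+1 != 0 by move=> j; exact: hc.
have hcq := Pshift_nz hc1.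
have h1 := P1_nz hc1.
rewrite big_nat_recl //.
under eq_big_nat => j /andP[_ Hj] do rewrite pascal2 mulrDl mulrDl mulrDl.
rewrite big_split /= addrA.
have -> : qb L.+1 0 * c ^+ 0 * q ^+ (0 * 0) / PP (c * q) 0 +
   \sum_(0 <= i < L.+1) qb L i.+1 * c ^+ i.+1 * q ^+ (i.+1 * i.+1) / PP (c * q) i.+1
   = \sum_(0 <= j < L.+1) qb L j * c ^+ j * q ^+ (j * j) / PP (c * q) j.
  rewrite (qb0 L.+1) -(qb0 L).
  rewrite -(big_nat_recl _ _ (fun j => qb L j * c^+j * q^+(j*j) / PP (c*q) j)) //.
  by rewrite big_nat_recr //= qb_gt // !mul0r addr0.
rewrite IH //.
have -> : \sum_(0 <= i < L.+1)
     q ^+ (L - i) * qb L i * c ^+ i.+1 * q ^+ (i.+1 * i.+1) / PP (c * q) i.+1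
  = c * q ^+ L.+1 / (1 - c * q) *
    \sum_(0 <= i < L.+1) qb L i * (c * q) ^+ i * q ^+ (i * i) / PP (c * q * q) i.
  rewrite big_distrr /=; apply: eq_big_nat => i /andP[_ Hi].
  rewrite PSl.
  have -> : (i.+1 * i.+1 = i * i + i + i + 1)%N by lia.
  have -> : L.+1 = (L - i + i + 1)%N by lia.
  rewrite !exprD !expr1 exprS exprMn.
  have := hcq i. move=> hh.
  field. by rewrite h1 hh.
rewrite IH; last by [].
have E1 := PS (c * q) L. have E2 := PSl (c * q) L.
have hu : PP (c * q) L != 0 by have := hc L.+1; rewrite PS mulf_eq0 negb_or => /andP[].
have hv : 1 - c * q * q ^+ L != 0 by have := hc L.+1; rewrite PS mulf_eq0 negb_or => /andP[].
have Ev : PP (c * q * q) L = PP (c * q) L * (1 - c * q * q ^+ L) / (1 - c * q).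
  rewrite -E1 E2. field. done.
rewrite Ev E1 exprS. field. by rewrite hu hv h1.
Qed.


Lemma PD_nz x a b : PP x (a + b) != 0 -> PP (x * q ^+ a) b != 0.
Proof. by rewrite PD mulf_eq0 negb_or => /andP[]. Qed.

Lemma sumB N k A : (forall j, PP (A * q) j != 0) ->
  \sum_(0 <= R < N.+1) qb R k * A ^+ R * q ^+ (R * R) / q ^+ (k * R)
       / (PP q (N - R) * PP q R * PP (A * q) R)
  = A ^+ k * qb N k / (PP q N * PP (A * q) N).
Proof.
move=> hA.
case: (leqP k N) => HkN; last first.
  rewrite qb_gt // mulr0 mul0r big1_seq // => R /andP[_].
  rewrite mem_index_iota => /andP[_ HR].
  by rewrite qb_gt ?mul0r //; lia.
rewrite (@big_cat_nat _ _ _ k) //=; last by lia.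
rewrite big1_seq ?add0r; last first.
  move=> R /andP[_]; rewrite mem_index_iota => /andP[_ HR].
  by rewrite qb_gt ?mul0r.
rewrite -{1}(add0n k) big_addn.
set L := (N.+1 - k)%N.
have HL : L = (N - k).+1 by rewrite /L; lia.
rewrite HL.
have hc : forall j, PP ((A * q ^+ k) * q) j != 0.
  move=> j; have := hA (k + j)%N.
  by move/PD_nz; rewrite mulrAC.
have E := sumA (N - k) hc.
have hPAk : PP (A * q) k != 0 by [].
have hPN : PP q N != 0 by [].
have EN : PP (A * q) N = PP (A * q) k * PP ((A * q ^+ k) * q) (N - k).
  by rewrite -{1}(subnKC HkN) PD mulrAC.
rewrite EN.
transitivity (A ^+ k / (PP q k * PP (A * q) k * PP q (N - k)) *
  \sum_(0 <= j < (N - k).+1) qb (N - k) j * (A * q ^+ k) ^+ j * q ^+ (j * j)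
     / PP (A * q ^+ k * q) j).
  rewrite big_distrr /=; apply: eq_big_nat => j /andP[_ Hj].
  rewrite /qb.
  have -> : (k <= j + k)%N by lia.
  have -> : (j <= N - k)%N by lia.
  have -> : (j + k - k = j)%N by lia.
  have -> : (N - (j + k) = N - k - j)%N by lia.
  rewrite addnC.
  have EA : PP (A * q) (k + j) = PP (A * q) k * PP (A * q ^+ k * q) j.
    by rewrite PD mulrAC.
  rewrite EA.
  have -> : ((k + j) * (k + j) = k * k + k * j + j * j + k * j)%N by lia.
  rewrite (_ : (k * (k + j))%N = (k * k + k * j)%N); last by lia.
  rewrite !exprD exprMn -exprM.
  have h1 := hPq j. have h2 := hPq k. have h3 := hPq (N - k - j).
  have h4 := hPq (N - k). have h5 := hc j. have h6 := hPq (k + j).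
  have hqk : q ^+ (k * k) != 0 by rewrite expf_neq0.
  have hqj : q ^+ (k * j) != 0 by rewrite expf_neq0.
  field. by rewrite h1 h2 h3 h4 h5 h6 hPAk hqk hqj.
rewrite E /qb HkN.
have h5 := hc (N - k)%N. have h7 := hPq k. have h8 := hPq (N - k)%N.
field. by rewrite h7 h8 h5 hPAk hPN.
Qed.


Lemma sum_recl0 n (f : nat -> F) : f n.+1 = 0 ->
  f 0%N + \sum_(0 <= k < n.+1) f k.+1 = \sum_(0 <= k < n.+1) f k.
Proof. by move=> H; rewrite -big_nat_recl // big_nat_recr //= H addr0. Qed.

Lemma qb_shift M k : qb M.+1 k.+1 * PP q k.+1 = (1 - q * q ^+ M) * (qb M k * PP q k).
Proof.
rewrite /qb ltnS; case: (leqP k M) => Hk; last by rewrite !mul0r mulr0.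
have -> : (M.+1 - k.+1 = M - k)%N by lia.
rewrite !PS.
have h1 := hPq k. have h2 := hPq (M - k)%N. have h3 := hq1 k.
field. by rewrite h1 h2 h3.
Qed.

Lemma sumC N M X : (forall j, PP (X * q) j != 0) ->
  \sum_(0 <= k < N.+1) qb N k * qb M k * PP q k * X ^+ k * q ^+ (k * k) / PP (X * q) k
  = PP (X * q) (N + M) / (PP (X * q) N * PP (X * q) M).
Proof.
elim: N M X => [|N IH] M X hX.
  rewrite big_nat1 !qb0 P0 muln0 !expr0 add0n P0 !mulr1 !mul1r invr1.
  by rewrite divff.
have hX1 : forall j, PP (X * q) j.+1 != 0 by move=> j; exact: hX.
have hXq := Pshift_nz hX1.
have h1 := P1_nz hX1.
rewrite big_nat_recl //.
under eq_big_nat => j /andP[_ Hj] do rewrite pascal2 !mulrDl.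
rewrite big_split /= addrA.
rewrite (qb0 N.+1) -(qb0 N) (@sum_recl0 N (fun k => qb N k * qb M k * PP q k * X ^+ k * q ^+ (k * k) / PP (X * q) k)); last first.
  by rewrite qb_gt // !mul0r.
rewrite IH //.
case: M => [|M].
  rewrite big1 ?addr0; last by move=> i _; rewrite (qb_gt (ltn0Sn i)) !mulr0 !mul0r.
  rewrite !addn0 !P0 !mulr1 !divff //.
have -> : \sum_(0 <= i < N.+1)
     q ^+ (N - i) * qb N i * qb M.+1 i.+1 * PP q i.+1 * X ^+ i.+1 * q ^+ (i.+1 * i.+1) / PP (X * q) i.+1
  = (1 - q * q ^+ M) * X * q ^+ N.+1 / (1 - X * q) *
    \sum_(0 <= i < N.+1) qb N i * qb M i * PP q i * (X * q) ^+ i * q ^+ (i * i) / PP (X * q * q) i.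
  rewrite big_distrr /=; apply: eq_big_nat => i /andP[_ Hi].
  rewrite -[_ * qb M.+1 i.+1 * _]mulrA qb_shift PSl.
  have -> : (i.+1 * i.+1 = i * i + i + i + 1)%N by lia.
  have -> : N.+1 = (N - i + i + 1)%N by lia.
  rewrite !exprD !expr1 exprS exprMn.
  have hh := hXq i.
  field. by rewrite h1 hh.
rewrite IH //.
have E1 : forall j, PP (X * q * q) j = PP (X * q) j.+1 / (1 - X * q).
  move=> j; rewrite PSl; field; done.
rewrite !E1 -addnS !addSn !PS.
have hN := hX N. have hM := hX M.+1. have hNM := hX (N + M.+1)%N.
have hN1 : 1 - X * q * q ^+ N != 0 by have := hX N.+1; rewrite PS mulf_eq0 negb_or => /andP[].
rewrite !exprS !exprD !exprS.
have hM' := hX M. have hM1 : 1 - X * q * q ^+ M != 0 by have := hX M.+1; rewrite PS mulf_eq0 negb_or => /andP[].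
field. by rewrite hN hM' hM1 hN1 h1.
Qed.


Lemma pascal1' r k : qb r.+1 k = q ^+ k * qb r k + (if k is k'.+1 then qb r k' else 0).
Proof. case: k => [|k]; first by rewrite !qb0 expr0 mulr1 addr0. by rewrite pascal1 addrC. Qed.

Lemma sumD r s x : (forall j, PP x j != 0) ->
  \sum_(0 <= k < r.+1) qb r k * qb s k * PP q k * q ^+ ((r - k) * (s - k)) / PP x k
  = PP x (r + s) / (PP x r * PP x s).
Proof.
elim: r s x => [|r IH] s x hx.
  rewrite big_nat1 !qb0 P0 sub0n mul0n expr0 add0n P0 !mulr1 !mul1r invr1.
  by rewrite divff.
have hx1 : forall j, PP x j.+1 != 0 by move=> j; exact: hx.
have hxq := Pshift_nz hx1.
have h1 := P1_nz hx1.
under eq_big_nat => k _ do rewrite pascal1' !mulrDl.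
rewrite big_split /=.
have -> : \sum_(0 <= i < r.+2) q ^+ i * qb r i * qb s i * PP q i * q ^+ ((r.+1 - i) * (s - i)) / PP x i
   = q ^+ s * \sum_(0 <= k < r.+1) qb r k * qb s k * PP q k * q ^+ ((r - k) * (s - k)) / PP x k.
  rewrite big_nat_recr //= qb_gt // !mulr0 !mul0r addr0 big_distrr /=.
  apply: eq_big_nat => k /andP[_ Hk].
  case: (leqP k s) => Hks; last by rewrite (qb_gt Hks) !(mulr0, mul0r).
  have -> : (r.+1 - k = (r - k).+1)%N by lia.
  have E : (k + (r - k).+1 * (s - k) = s + (r - k) * (s - k))%N by nia.
  have E2 : q ^+ k * q ^+ ((r - k).+1 * (s - k)) = q ^+ s * q ^+ ((r - k) * (s - k)) by rewrite -!exprD E.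
  transitivity (qb r k * qb s k * PP q k / PP x k * (q ^+ k * q ^+ ((r - k).+1 * (s - k)))); first by ring.
  by rewrite E2; ring.
rewrite IH //.
rewrite big_nat_recl //= !mul0r add0r.
case: s => [|s].
  rewrite big1 ?addr0; last by move=> i _; rewrite (qb_gt (ltn0Sn i)) !mulr0 !mul0r.
  by rewrite expr0 mul1r !addn0 !P0 !mulr1 !divff.
have -> : \sum_(0 <= i < r.+1)
     qb r i * qb s.+1 i.+1 * PP q i.+1 * q ^+ ((r.+1 - i.+1) * (s.+1 - i.+1)) / PP x i.+1
  = (1 - q * q ^+ s) / (1 - x) *
    \sum_(0 <= i < r.+1) qb r i * qb s i * PP q i * q ^+ ((r - i) * (s - i)) / PP (x * q) i.
  rewrite big_distrr /=; apply: eq_big_nat => i /andP[_ Hi].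
  rewrite -[_ * qb s.+1 i.+1 * _]mulrA qb_shift PSl !subSS.
  have hh := hxq i.
  field. by rewrite h1 hh.
rewrite IH //.
have E1 : forall j, PP (x * q) j = PP x j.+1 / (1 - x).
  move=> j; rewrite PSl; field; done.
rewrite !E1 -addnS !addSn !PS.
have hr := hx r. have hs := hx s. 
have hr1 : 1 - x * q ^+ r != 0 by have := hx r.+1; rewrite PS mulf_eq0 negb_or => /andP[].
have hs1 : 1 - x * q ^+ s != 0 by have := hx s.+1; rewrite PS mulf_eq0 negb_or => /andP[].
rewrite !exprS !exprD !exprS.
field. by rewrite hr hs hr1 hs1 h1.
Qed.

Lemma sum_widen a b (f : nat -> F) : (a <= b)%N -> (forall k, (a < k)%N -> f k = 0) ->
  \sum_(0 <= k < a.+1) f k = \sum_(0 <= k < b.+1) f k.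
Proof.
move=> hab H.
rewrite [RHS](@big_cat_nat _ _ _ a.+1) //= [X in _ = _ + X]big1_seq ?addr0 // => k /andP[_].
by rewrite mem_index_iota => /andP[h _]; apply: H.
Qed.

Lemma stepA N M A B : (forall j, PP (A * q) j != 0) -> (forall j, PP (B * q) j != 0) ->
  (forall j, PP (A * B * q) j != 0) ->
  \sum_(0 <= R < N.+1) \sum_(0 <= S < M.+1)
    (A ^+ R * q ^+ (R * R) / (PP q (N - R) * PP q R * PP (A * q) R)) *
    (B ^+ S * q ^+ (S * S) / (PP q (M - S) * PP q S * PP (B * q) S)) / q ^+ (R * S) *
    (PP (A * B * q) (R + S) / (PP (A * B * q) R * PP (A * B * q) S))
  = PP (A * B * q) (N + M) / (PP q N * PP (A * q) N * PP (A * B * q) N *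
                              PP q M * PP (B * q) M * PP (A * B * q) M).
Proof.
move=> hA hB hX.
pose a R k := qb R k * A ^+ R * q ^+ (R * R) / q ^+ (k * R)
       / (PP q (N - R) * PP q R * PP (A * q) R).
pose b S k := qb S k * B ^+ S * q ^+ (S * S) / q ^+ (k * S)
       / (PP q (M - S) * PP q S * PP (B * q) S).
pose g k := PP q k * q ^+ (k * k) / PP (A * B * q) k.
transitivity (\sum_(0 <= k < N.+1) g k * ((\sum_(0 <= R < N.+1) a R k) * (\sum_(0 <= S < M.+1) b S k))).
  transitivity (\sum_(0 <= R < N.+1) \sum_(0 <= S < M.+1) \sum_(0 <= k < N.+1) g k * (a R k * b S k)).
    apply: eq_big_nat => R /andP[_ HR]; apply: eq_big_nat => S _.
    rewrite -(sumD R S hX) (@sum_widen R N) //; last first.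
      by move=> k hk; rewrite (qb_gt hk) !(mulr0, mul0r).
    rewrite big_distrr /=; apply: eq_big_nat => k _.
    rewrite /g /a /b.
    case: (leqP k R) => hkR; last by rewrite (qb_gt hkR) !(mulr0, mul0r).
    case: (leqP k S) => hkS; last by rewrite (qb_gt hkS) !(mulr0, mul0r).
    have hq : forall e, q ^+ e != 0 by move=> e; rewrite expf_neq0.
    have Eq : q ^+ ((R - k) * (S - k)) = q ^+ (k * k) * q ^+ (R * S) / (q ^+ (k * R) * q ^+ (k * S)).
      apply: (@mulIf _ (q ^+ (k * R) * q ^+ (k * S))); first by rewrite mulf_neq0.
      rewrite divfK ?mulf_neq0 // -!exprD; congr (_ ^+ _); nia.
    rewrite Eq.
    have h1 := hX R. have h2 := hX S. have h3 := hX k. have h4 := hPq k.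
    have h5 := hPq R. have h6 := hPq S. have h7 := hA R. have h8 := hB S.
    have h9 := hPq (N - R)%N. have h10 := hPq (M - S)%N.
    have h11 := hq (k * R)%N. have h12 := hq (k * S)%N. have h13 := hq (R * S)%N.
    field. by rewrite ?h1 ?h2 ?h3 ?h4 ?h5 ?h6 ?h7 ?h8 ?h9 ?h10 ?h11 ?h12 ?h13.
  under eq_big_nat => R _ do rewrite exchange_big_nat.
  rewrite exchange_big_nat; apply: eq_big_nat => k _.
  rewrite [in RHS]big_distrl /= [in RHS]big_distrr /=; apply: eq_big_nat => R _.
  by rewrite big_distrr /= big_distrr /=.
transitivity (\sum_(0 <= k < N.+1) g k * ((A ^+ k * qb N k / (PP q N * PP (A * q) N)) *
                                        (B ^+ k * qb M k / (PP q M * PP (B * q) M)))).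
  apply: eq_big_nat => k _; congr (_ * (_ * _)).
  - exact: sumB.
  - exact: sumB.
have hX' : forall j, PP ((A * B) * q) j != 0 by [].
have E := sumC N M hX'.
transitivity (\sum_(0 <= k < N.+1)
     qb N k * qb M k * PP q k * (A * B) ^+ k * q ^+ (k * k) / PP (A * B * q) k
   / (PP q N * PP (A * q) N * PP q M * PP (B * q) M)).
  apply: eq_big_nat => k _; rewrite /g exprMn.
  have h1 := hPq N. have h2 := hPq M. have h3 := hA N. have h4 := hB M. have h5 := hX k.
  field. by rewrite ?h1 ?h2 ?h3 ?h4 ?h5.
rewrite -mulr_suml E.
have h1 := hPq N. have h2 := hPq M. have h3 := hA N. have h4 := hB M.
have h5 := hX N. have h6 := hX M.
field. by rewrite ?h1 ?h2 ?h3 ?h4 ?h5 ?h6.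
Qed.

End Core.

Section B.
Variable F : fieldType.
Variable q : F.
Hypothesis hq0 : q != 0.
Hypothesis hPq : forall j, P q q j != 0.
Local Notation PP := (P q).

Lemma qU : q \is a GRing.unit. Proof. by rewrite unitfE. Qed.

Lemma qpochP x k : qpoch x q (Posz k) = PP x k. Proof. by []. Qed.

Lemma rq_neg i : (i < 0)%R -> rqpoch q q i = 0.
Proof.
case: i => // k _.
rewrite /rqpoch /qpoch big_ord_recl /= expr1 divff // subrr mul0r.
by rewrite !invr0.
Qed.

Lemma qpoch_shift x (al : int) (R : nat) : (-1 <= al)%R -> 1 - x * q ^- 1 != 0 ->
  qpoch x q (R%:Z + al) = qpoch x q al * PP (x * q ^ al) R.
Proof.
case: al => [k|k] H hx.
  by rewrite -PoszD !qpochP addnC PD.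
case: k H => [|k] H; last by exfalso; move: H; rewrite NegzE; lia.
case: R => [|R].
  by rewrite add0r P0 mulr1.
have -> : (R.+1%:Z + Negz 0 = R%:Z) by rewrite NegzE -addn1 PoszD addrK.
rewrite qpochP PSl /qpoch big_ord1 /=.
have -> : x * q ^ Negz 0 * q = x by rewrite /exprz expr1 mulfVK.
have -> : q ^ Negz 0 = q ^- 1 by [].
field. rewrite hq0 /=.
have -> : q - x = q * (1 - x / q ^+ 1) by rewrite expr1 mulrBr mulr1 mulrCA divff // mulr1.
by rewrite mulf_neq0.
Qed.

Lemma Pnz x : (forall k : int, 1 - x * q ^ k != 0) -> forall (c : int) j, PP (x * q ^ c) j != 0.
Proof.
move=> hx c j; apply/prodf_neq0 => i _.
by rewrite -mulrA exprnP -exprzDr ?qU.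
Qed.


Lemma Pnz0 x : (forall k : int, 1 - x * q ^ k != 0) -> forall j, PP x j != 0.
Proof. by move=> hx j; have := Pnz hx 0 j; rewrite expr0z mulr1. Qed.

Lemma qpoch_nz x (al : int) : (forall k : int, 1 - x * q ^ k != 0) -> (-1 <= al)%R ->
  qpoch x q al != 0.
Proof.
move=> hx; case: al => [k|k] H; first exact: Pnz0.
case: k H => [|k] H; last by exfalso; move: H; rewrite NegzE; lia.
rewrite /qpoch big_ord1 invr_eq0.
by have := hx (-1); rewrite exprN1.
Qed.


Lemma sum_shift_ord p0 N (G : nat -> F) : (forall r, (r < p0)%N -> G r = 0) ->
  \sum_(r < (p0 + N).+1) G r = \sum_(R < N.+1) G (p0 + R)%N.
Proof.
move=> H.
rewrite -(big_mkord xpredT G) -(big_mkord xpredT (fun R => G (p0 + R)%N)).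
rewrite (@big_cat_nat _ _ _ p0) //=; last by lia.
rewrite big1_seq ?add0r; last first.
  by move=> r /andP[_]; rewrite mem_index_iota => /andP[_ h]; apply: H.
rewrite -{1}(add0n p0) big_addn.
have -> : ((p0 + N).+1 - p0 = N.+1)%N by lia.
by apply: eq_big_nat => R _; rewrite addnC.
Qed.

Section Red.
Variables (a b : F) (p t : nat) (al be : int).
Hypothesis hal : al = 2 * p%:Z - t%:Z.
Hypothesis hbe : be = 2 * t%:Z - p%:Z.
Hypothesis hal1 : (-1 <= al)%R.
Hypothesis hbe1 : (-1 <= be)%R.
Hypothesis hpt : (p * p + t * t = p * t + p + t)%N.
Hypothesis ha : forall k : int, 1 - a * q * q ^ k != 0.
Hypothesis hb : forall k : int, 1 - b * q * q ^ k != 0.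
Hypothesis hab : forall k : int, 1 - a * b * q * q ^ k != 0.

Let A := a * q ^ al.
Let B := b * q ^ be.

Lemma eA : a * q * q ^ al = A * q. Proof. by rewrite /A mulrAC. Qed.
Lemma eB : b * q * q ^ be = B * q. Proof. by rewrite /B mulrAC. Qed.
Lemma eX : a * b * q * q ^+ (p + t) = A * B * q.
Proof.
rewrite /A /B exprnP.
have -> : (p + t)%N%:Z = al + be by rewrite hal hbe; lia.
rewrite exprzDr ?qU //.
ring.
Qed.

Lemma Phiy_eq R S :
  Phiy (p + R)%N (t + S)%N p%:Z (t%:Z - p%:Z) (- t%:Z) a b q
  = (qpoch (a * q) q al * qpoch (b * q) q be * PP (a * b * q) (p + t))^-1 *
    (PP (A * B * q) (R + S) / (PP q R * PP (A * q) R * PP (A * B * q) R *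
                              PP q S * PP (B * q) S * PP (A * B * q) S)).
Proof.
rewrite /Phiy /rqpoch.
have -> : (p + R)%N%:Z + (t + S)%N%:Z = (R + S)%N%:Z + (p + t)%N%:Z by lia.
have -> : (p + R)%N%:Z - p%:Z = R%:Z by lia.
have -> : (p + R)%N%:Z - (t%:Z - p%:Z) = R%:Z + al by rewrite hal; lia.
have -> : (p + R)%N%:Z - - t%:Z = R%:Z + (p + t)%N%:Z by lia.
have -> : (t + S)%N%:Z + - t%:Z = S%:Z by lia.
have -> : (t + S)%N%:Z + (t%:Z - p%:Z) = S%:Z + be by rewrite hbe; lia.
have -> : (t + S)%N%:Z + p%:Z = S%:Z + (p + t)%N%:Z by lia.
have hm1 : forall x, (forall k : int, 1 - x * q ^ k != 0) -> 1 - x * q ^- 1 != 0.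
  by move=> x hx; have := hx (-1); rewrite exprN1.
have hpt0 : (-1 <= (p + t)%N%:Z)%R by lia.
rewrite !(qpoch_shift _ hpt0 (hm1 _ hab)).
rewrite (qpoch_shift _ hal1 (hm1 _ ha)) (qpoch_shift _ hbe1 (hm1 _ hb)).
rewrite !qpochP -exprnP eA eB eX.
have h1 := qpoch_nz ha hal1. have h2 := qpoch_nz hb hbe1.
have h3 := Pnz0 hab (p + t)%N.
have h4 : forall j, PP (A * q) j != 0 by move=> j; rewrite -eA; exact: Pnz.
have h5 : forall j, PP (B * q) j != 0 by move=> j; rewrite -eB; exact: Pnz.
have h6 : forall j, PP (A * B * q) j != 0 by move=> j; rewrite -eX; exact: (Pnz hab (p + t)%N%:Z j).
have g1 := hPq R. have g2 := hPq S. have g3 := h4 R. have g4 := h5 S.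
have g5 := h6 R. have g6 := h6 S.
field. by rewrite ?h1 ?h2 ?h3 ?g1 ?g2 ?g3 ?g4 ?g5 ?g6.
Qed.


Lemma Kcal_eq N M R S : (R <= N)%N -> (S <= M)%N ->
  Kcal (p + N)%N (t + M)%N (p + R)%N (t + S)%N a b q
  = a ^+ p * b ^+ t * q ^+ (p + t) *
    ((A ^+ R * q ^+ (R * R) / PP q (N - R)) * (B ^+ S * q ^+ (S * S) / PP q (M - S))
      / q ^+ (R * S)).
Proof.
move=> HR HS.
rewrite /Kcal /rqpoch.
have -> : (p + N)%N%:Z - (p + R)%N%:Z = (N - R)%N%:Z by lia.
have -> : (t + M)%N%:Z - (t + S)%N%:Z = (M - S)%N%:Z by lia.
rewrite !qpochP.
have hq : forall e, q ^+ e != 0 by move=> e; rewrite expf_neq0.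
set E := (_ ^+ 2 - _ + _ ^+ 2).
have Eq : q ^ E * q ^+ (R * S) = q ^+ (p + t) * q ^+ (R * R) * q ^+ (S * S) * q ^ (al * R%:Z) * q ^ (be * S%:Z).
  rewrite !exprnP -!exprzDr ?qU //; congr (_ ^ _); rewrite /E hal hbe; nia.
have Eq' : q ^ E = q ^+ (p + t) * q ^+ (R * R) * q ^+ (S * S) * q ^ (al * R%:Z) * q ^ (be * S%:Z) / q ^+ (R * S).
  by rewrite -Eq mulfK.
rewrite Eq' /A /B !exprMn !exprnP !exprz_exp -!exprnP !exprD.
have g1 := hPq (N - R)%N. have g2 := hPq (M - S)%N. have g3 := hq (R * S)%N.
field. by rewrite ?g1 ?g2 ?g3.
Qed.

Lemma Phiy_zero_r (r s : nat) : (r < p)%N ->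
  Phiy r s p%:Z (t%:Z - p%:Z) (- t%:Z) a b q = 0.
Proof.
move=> h; rewrite /Phiy (@rq_neg (r%:Z - p%:Z)); first by rewrite !(mulr0, mul0r).
by rewrite subr_lt0 ltz_nat.
Qed.

Lemma Phiy_zero_s (r s : nat) : (s < t)%N ->
  Phiy r s p%:Z (t%:Z - p%:Z) (- t%:Z) a b q = 0.
Proof.
move=> h; rewrite /Phiy (@rq_neg (s%:Z + - t%:Z)); first by rewrite !(mulr0, mul0r).
by rewrite subr_lt0 ltz_nat.
Qed.

Lemma stepB n m :
  \sum_(r < n.+1) \sum_(s < m.+1)
     Kcal n m r s a b q * Phiy r s p%:Z (t%:Z - p%:Z) (- t%:Z) a b q
  = (a * q) ^+ p * (b * q) ^+ t * Phiy n m p%:Z (t%:Z - p%:Z) (- t%:Z) a b q.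
Proof.
case: (ltnP n p) => Hn.
  rewrite Phiy_zero_r // mulr0 big1 // => r _; rewrite big1 // => s _.
  by rewrite Phiy_zero_r ?mulr0 //; have := ltn_ord r; lia.
case: (ltnP m t) => Hm.
  rewrite Phiy_zero_s // mulr0 big1 // => r _; rewrite big1 // => s _.
  by rewrite Phiy_zero_s ?mulr0 //; have := ltn_ord s; lia.
have [N ->] : exists N, n = (p + N)%N by exists (n - p)%N; lia.
have [M ->] : exists M, m = (t + M)%N by exists (m - t)%N; lia.
rewrite (@sum_shift_ord p N (fun r => \sum_(s < (t + M).+1)
     Kcal (p + N)%N (t + M)%N r s a b q * Phiy r s p%:Z (t%:Z - p%:Z) (- t%:Z) a b q)); last first.
  by move=> r hr; rewrite big1 // => s _; rewrite Phiy_zero_r ?mulr0.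
transitivity (\sum_(R < N.+1) \sum_(S < M.+1)
     Kcal (p + N)%N (t + M)%N (p + R)%N (t + S)%N a b q *
     Phiy (p + R)%N (t + S)%N p%:Z (t%:Z - p%:Z) (- t%:Z) a b q).
  apply: eq_bigr => R _.
  rewrite (@sum_shift_ord t M (fun s =>
     Kcal (p + N)%N (t + M)%N (p + R)%N s a b q * Phiy (p + R)%N s p%:Z (t%:Z - p%:Z) (- t%:Z) a b q)) //.
  by move=> s hs; rewrite Phiy_zero_s ?mulr0.
have hAq : forall j, PP (A * q) j != 0 by move=> j; rewrite -eA; exact: Pnz.
have hBq : forall j, PP (B * q) j != 0 by move=> j; rewrite -eB; exact: Pnz.
have hXq : forall j, PP (A * B * q) j != 0 by move=> j; rewrite -eX; exact: (Pnz hab (p + t)%N%:Z j).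
have h1 := qpoch_nz ha hal1. have h2 := qpoch_nz hb hbe1.
have h3 := Pnz0 hab (p + t)%N.
have hq : forall e, q ^+ e != 0 by move=> e; rewrite expf_neq0.
pose C := a ^+ p * b ^+ t * q ^+ (p + t) *
   (qpoch (a * q) q al * qpoch (b * q) q be * PP (a * b * q) (p + t))^-1.
transitivity (C * \sum_(0 <= R < N.+1) \sum_(0 <= S < M.+1)
    (A ^+ R * q ^+ (R * R) / (PP q (N - R) * PP q R * PP (A * q) R)) *
    (B ^+ S * q ^+ (S * S) / (PP q (M - S) * PP q S * PP (B * q) S)) / q ^+ (R * S) *
    (PP (A * B * q) (R + S) / (PP (A * B * q) R * PP (A * B * q) S))).
  rewrite big_mkord big_distrr /=; apply: eq_bigr => R _.
  rewrite big_mkord big_distrr /=; apply: eq_bigr => S _.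
  have HR : (R <= N)%N by rewrite -ltnS.
  have HS : (S <= M)%N by rewrite -ltnS.
  rewrite Kcal_eq // Phiy_eq /C.
  have g1 := hPq (N - R)%N. have g2 := hPq (M - S)%N. have g3 := hq (R * S)%N.
  have g4 := hPq R. have g5 := hPq S. have g6 := hAq R. have g7 := hBq S.
  have g8 := hXq R. have g9 := hXq S.
  field. by rewrite ?h1 ?h2 ?h3 ?g1 ?g2 ?g3 ?g4 ?g5 ?g6 ?g7 ?g8 ?g9.
rewrite (stepA hq0 hPq N M hAq hBq hXq) Phiy_eq /C !exprMn exprD.
have g1 := hPq N. have g2 := hPq M. have g6 := hAq N. have g7 := hBq M.
have g8 := hXq N. have g9 := hXq M.
field. by rewrite ?h1 ?h2 ?h3 ?g1 ?g2 ?g6 ?g7 ?g8 ?g9.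
Qed.

End Red.

End B.

Lemma perm3 (x0 x1 x2 : nat) : (x0 < 3)%N -> (x1 < 3)%N -> (x2 < 3)%N ->
  x0 != x1 -> x0 != x2 -> x1 != x2 ->
  [&& (x0 + x1 + x2 == 3)%N, (x2 <= 2)%N, (2 - x2 <= 2 * x0 + 1)%N, (x0 <= 2 * (2 - x2) + 1)%N &
      (x0 * x0 + (2 - x2) * (2 - x2) == x0 * (2 - x2) + x0 + (2 - x2))%N].
Proof.
by move: x0 x1 x2 => [|[|[|?]]] [|[|[|?]]] [|[|[|?]]].
Qed.

Unset Implicit Arguments.

Theorem theorem4p9 (F : fieldType) (n m : nat) (u v c d z w q : F) :
  q != 0 -> (forall k : nat, (0 < k)%N -> q ^+ k != 1) ->
  u != 0 -> d != 0 -> z != 0 -> w != 0 ->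
  (forall k : int, 1 - z * q ^ k != 0) ->
  (forall k : int, 1 - w * q ^ k != 0) ->
  (forall k : int, 1 - z * w * q ^ k != 0) ->
  \sum_(r < n.+1) \sum_(s < m.+1)
     Kcal n m r s (z / q) (w / q) q * Phi r s u v c d z w q
  = Phi n m (u * z) (v * w) (c * z) (d * w) z w q.
Proof.
move=> hq0 hqk hu hd hz hw hz' hw' hzw'.
have hPq : forall j, P q q j != 0.
  move=> j; apply/prodf_neq0 => i _.
  by rewrite -exprS subr_eq0 eq_sym hqk.
have ha : forall k : int, 1 - z / q * q * q ^ k != 0 by move=> k; rewrite divfK.
have hb : forall k : int, 1 - w / q * q * q ^ k != 0 by move=> k; rewrite divfK.
have hab : forall k : int, 1 - z / q * (w / q) * q * q ^ k != 0.
  move=> k; have := hzw' (k - 1).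
  have -> : z / q * (w / q) * q * q ^ k = z * w * q ^ (k - 1); last by [].
  rewrite exprzDr ?unitfE // exprN1; field; done.
rewrite /Phi.
under eq_bigr => r _ do under eq_bigr => s _ do rewrite big_distrr /=.
under eq_bigr => r _ do rewrite exchange_big /=.
rewrite exchange_big /=; apply: eq_bigr => sg _.
set x0 := (sg i0 : nat). set x1 := (sg i1 : nat). set x2 := (sg i2 : nat).
have hsg : forall i j : 'I_3, i != j -> (sg i : nat) != sg j.
  by move=> i j hij; rewrite -[_ == _]/(sg i == sg j) (inj_eq (@perm_inj _ sg)).
have := @perm3 x0 x1 x2 (ltn_ord _) (ltn_ord _) (ltn_ord _) (hsg i0 i1 isT) (hsg i0 i2 isT) (hsg i1 i2 isT).
move/and5P => [/eqP Hsum H2 Hal Hbe /eqP Hpt].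
set p := x0. set t := (2 - x2)%N.
have E1 : x0%:Z - 0 = p%:Z by rewrite subr0.
have E2 : x1%:Z - 1 = t%:Z - p%:Z by rewrite /t /p; lia.
have E3 : x2%:Z - 2 = - t%:Z by rewrite /t; lia.
rewrite E1 E2 E3.
set coef := (-1) ^+ sg * (u * z) ^+ p * (v / d) ^+ (sg i2 == i0) *
         (c / u) ^+ (sg i0 == i2) * (d * w) ^+ t.
transitivity (coef * \sum_(r < n.+1) \sum_(s < m.+1)
     Kcal n m r s (z / q) (w / q) q * Phiy r s p (t%:Z - p%:Z) (- t%:Z) (z / q) (w / q) q).
  rewrite big_distrr /=; apply: eq_bigr => r _.
  rewrite big_distrr /=; apply: eq_bigr => s _.
  by rewrite mulrCA.
have hal1 : (-1 <= 2 * p%:Z - t%:Z)%R by rewrite /p /t; lia.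
have hbe1 : (-1 <= 2 * t%:Z - p%:Z)%R by rewrite /p /t; lia.
rewrite (stepB hq0 hPq erefl erefl hal1 hbe1 Hpt ha hb hab n m).
rewrite !divfK //.
have -> : v * w / (d * w) = v / d by field; rewrite hd hw.
have -> : c * z / (u * z) = c / u by field; rewrite hu hz.
rewrite !exprMn -/x2 -/t.
rewrite /coef !exprMn.
move: (Phiy _ _ _ _ _ _ _ _) => Ph.
move: ((-1) ^+ sg) => sgn.
move: (nat_of_bool (sg i2 == i0)) => e1.
move: (nat_of_bool (sg i0 == i2)) => e2.
ring.
Qed.
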